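(* For integers $d\ge1$ and $s\ge0$, let $F_s^d$ be the number of lattice paths with unit steps $(1,0)$ and $(0,1)$ from $(0,0)$ to $(s+2,s)$ all of whose points other than the endpoint satisfy $x-2<y<x+d$ (the endpoint lies on $y=x-2$). Then for every $\alpha\in(0,1/2)$, $$\sum_{s=0}^\infty F_s^d\,\big(\alpha(1-\alpha)\big)^s=\frac{1}{\alpha^2}\left(1-\frac{1-2\alpha}{(1-\alpha)^2\Big(1-\big(\tfrac{\alpha}{1-\alpha}\big)^{d+2}\Big)}\right).$$ *)

(* Defs.v *)
From HB Require Import structures.
From mathcomp Require Import all_boot all_order all_algebra.
From mathcomp Require Import all_classical all_reals all_analysis.
Set Implicit Arguments. Unset Strict Implicit. Unset Printing Implicit Defensive.

(* A lattice path with unit steps (1,0) and (0,1) is encoded as a sequence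
   of booleans: true = step (1,0), false = step (0,1). *)
Definition px (p : seq bool) (k : nat) : nat := count id (take k p).
Definition py (p : seq bool) (k : nat) : nat := count negb (take k p).

(* Path from (0,0) to (s+2,s): 2s+2 steps, s+2 of which are (1,0);
   every point other than the endpoint (i.e. after k < 2s+2 steps)
   satisfies x - 2 < y < x + d (as integers; x - 2 < y <-> x < y + 2). *)
Definition good_path (d s : nat) (p : seq bool) : bool :=
  (size p == (s + 2) + s)%N && (count id p == s + 2)%N &&
  [forall k : 'I_(size p), (px p k < py p k + 2)%N && (py p k < px p k + d)%N].

Definition F (d s : nat) : nat :=
  #|[set t : ((s + 2) + s).-tuple bool | good_path d s t]|.

(* Main.v *)
Require Import Defs.
From HB Require Import structures.
From mathcomp Require Import all_boot all_order all_algebra.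
From mathcomp Require Import all_classical all_reals all_analysis.
From mathcomp Require Import zify ring lra.
Import Order.TTheory GRing.Theory Num.Theory numFieldNormedType.Exports.
Set Implicit Arguments. Unset Strict Implicit.
Local Open Scope ring_scope.

Fixpoint allseqs (n : nat) : seq (seq bool) :=
  if n is n'.+1 then [seq true :: p | p <- allseqs n'] ++ [seq false :: p | p <- allseqs n']
  else [:: [::]].

Fixpoint valid (N j : nat) (p : seq bool) : bool :=
  match p with
  | [::] => j == 0%N
  | b :: q => (0 < j < N)%N && valid N (if b then j.-1 else j.+1) q
  end.

Lemma cons_inj (b : bool) : injective (cons b).
Proof. by move=> x y []. Qed.

Lemma mem_allseqs n p : (p \in allseqs n) = (size p == n).
Proof.
elim: n p => [|n IH] [|b q] //=.
- by rewrite mem_cat; apply/negP => /orP[] /mapP [x _].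
- rewrite mem_cat eqSS -IH; case: b.
  + rewrite mem_map; last exact: cons_inj.
    have -> : (true :: q \in [seq false :: p | p <- allseqs n]) = false.
      by apply/mapP => -[x _].
    by rewrite orbF.
  + have -> : (false :: q \in [seq true :: p | p <- allseqs n]) = false.
      by apply/mapP => -[x _].
    by rewrite mem_map //; exact: cons_inj.
Qed.

Lemma uniq_allseqs n : uniq (allseqs n).
Proof.
elim: n => [|n IH] //=.
rewrite cat_uniq !map_inj_uniq ?IH //=; try exact: cons_inj.
by rewrite andbT; apply/hasPn => x /mapP [q _ ->]; apply/mapP => -[y _].
Qed.

Lemma big_allseqs (R : ringType) n (P : pred (seq bool)) (f : seq bool -> R) :
  \sum_(p <- allseqs n | P p) f p = \sum_(t : n.-tuple bool | P t) f t.
Proof.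
rewrite -(big_map (@tval n bool) P f).
apply: perm_big; apply: uniq_perm.
- exact: uniq_allseqs.
- by rewrite map_inj_uniq ?index_enum_uniq //; exact: val_inj.
move=> p; rewrite mem_allseqs; apply/eqP/mapP => [h|[t _ ->]].
  by exists (Tuple (introT eqP h)) => //; rewrite mem_index_enum.
by rewrite size_tuple.
Qed.

Definition wt (R : ringType) (a : R) (p : seq bool) := a ^+ count id p * (1 - a) ^+ count negb p.

Fixpoint cw (R : ringType) (a : R) (N n j : nat) : R :=
  if n is n'.+1 then
    (if (0 < j < N)%N then a * cw a N n' j.-1 + (1 - a) * cw a N n' j.+1 else 0)
  else (j == 0%N)%:R.

Lemma cw_sum (R : comRingType) (a : R) N n j :
  cw a N n j = \sum_(p <- allseqs n | valid N j p) wt a p.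
Proof.
elim: n j => [|n IH] j /=.
  by rewrite big_cons big_nil /=; case: (j == 0%N) => //; rewrite /wt /= !mulr1 addr0.
rewrite big_cat !big_map /=.
case: (0 < j < N)%N => /=; last by rewrite !big1 ?addr0.
rewrite !IH !mulr_sumr; congr (_ + _); apply: eq_bigr => p _;
  rewrite /wt /= ?exprS; ring.
Qed.

Lemma valid_char N j p :
  valid N j p <->
  (forall k, (k < size p)%N -> (px p k < j + py p k < px p k + N)%N) /\
  count id p = (j + count negb p)%N.
Proof.
elim: p j => [|b q IH] j /=.
  by split => [/eqP ->|[_ h]]; [split|apply/eqP; lia].
split.
- move/andP => [hj /IH [H1 H2]]; split.
  + move=> [_|k hk]; first by rewrite /px /py /=; lia.
    have := H1 k hk; clear H1 H2; rewrite /px /py /=; case: b hj; lia.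
  + clear H1; case: b H2 hj => /=; lia.
- move=> [H1 H2].
  have hj : (0 < j < N)%N by have := H1 0%N isT; rewrite /px /py /=; lia.
  rewrite hj /=; apply/IH; split.
  + move=> k hk; have := H1 k.+1 hk; clear H1 H2 IH; rewrite /px /py /=; case: b hj; lia.
  + clear H1 IH; case: b H2 hj => /=; lia.
Qed.

Lemma count_idnegb (p : seq bool) : (count id p + count negb p)%N = size p.
Proof. by elim: p => //= b q IH; case: b => /=; lia. Qed.

Lemma valid_good d s (p : seq bool) : size p = ((s + 2) + s)%N ->
  valid (d + 2) 2 p = good_path d s p.
Proof.
move=> hsz; have hc := count_idnegb p.
apply/idP/idP.
- move=> /valid_char [H1 H2].
  have hs : count id p = (s + 2)%N by lia.
  rewrite /good_path hsz hs !eqxx /=.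
  apply/forallP => k; have hk : (k < size p)%N by rewrite hsz.
  have /andP [h1 h2] := H1 k hk.
  by apply/andP; split; lia.
- move/andP=> [/andP [_ /eqP hs] /forallP H]; apply/valid_char; split.
  + move=> k hk; have /andP [h1 h2] := H (Ordinal hk).
    by apply/andP; split; simpl in *; lia.
  + lia.
Qed.

Lemma valid_count N j p : valid N j p -> count id p = (j + count negb p)%N.
Proof. by case/valid_char. Qed.

Lemma wt_valid (R : ringType) (a : R) N s (p : seq bool) :
  size p = ((s + 2) + s)%N -> valid N 2 p -> wt a p = a ^+ (s + 2) * (1 - a) ^+ s.
Proof.
move=> hs /valid_count hc; rewrite /wt; have := count_idnegb p => h.
have -> : count id p = (s + 2)%N by lia.
by have -> : count negb p = s by lia.
Qed.

Lemma cw_F (R : comRingType) (a : R) d s :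
  cw a (d + 2) ((s + 2) + s) 2 = (F d s)%:R * (a ^+ (s + 2) * (1 - a) ^+ s).
Proof.
rewrite cw_sum big_allseqs.
transitivity (\sum_(t in [set t : ((s+2)+s).-tuple bool | good_path d s t])
                 (a ^+ (s + 2) * (1 - a) ^+ s)); last first.
  by rewrite sumr_const mulr_natl.
apply: eq_big => t.
  by rewrite inE (@valid_good d s) // size_tuple.
by move=> hv; apply: wt_valid hv; rewrite size_tuple.
Qed.

Lemma cw_odd (R : comRingType) (a : R) N m :
  cw a N (2 * m).+1 2 = 0.
Proof.
rewrite cw_sum big1_seq // => p /andP [/valid_count hc].
rewrite mem_allseqs => /eqP hs; have := count_idnegb p => h.
rewrite -h hc in hs; exfalso; lia.
Qed.

Lemma solve_rec (R : realFieldType) (a : R) (L : nat -> R) N :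
  0 < a -> a < 2^-1 -> (2 < N)%N -> L 0%N = 1 -> L N = 0 ->
  (forall j, (0 < j < N)%N -> L j = a * L j.-1 + (1 - a) * L j.+1) ->
  L 2%N = 1 - (1 - (a / (1 - a)) ^+ 2) / (1 - (a / (1 - a)) ^+ N).
Proof.
move=> a0 a2 N2 L0 LN Lrec.
have a1 : 1 - a != 0 by apply/eqP; lra.
have ha1 : 0 < 1 - a by lra.
set r := a / (1 - a).
have r0 : 0 <= r by rewrite /r divr_ge0 //; lra.
have r1 : r < 1 by rewrite /r ltr_pdivrMr // mul1r; lra.
have r1' : 1 - r != 0 by apply/eqP; lra.
have rN : 1 - r ^+ N != 0.
  have hlt : r ^+ N < 1 by rewrite exprn_ilt1 //; apply/eqP => hN; rewrite hN in N2.
  by apply/eqP; lra.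
set c := L 0%N - L 1%N.
have claim : forall j, (j.+1 <= N)%N ->
    L j = 1 - c * (1 - r ^+ j) / (1 - r) /\ L j.+1 = 1 - c * (1 - r ^+ j.+1) / (1 - r).
  elim => [|j IH] hj.
    rewrite expr0 subrr mulr0 mul0r subr0 L0 expr1 mulfK //; split => //.
    by rewrite /c L0; ring.
  have [h1 h2] := IH (ltnW hj); split => //.
  have e := Lrec j.+1 (ltac:(lia)); rewrite /= in e.
  have -> : L j.+2 = (L j.+1 - a * L j) / (1 - a) by rewrite e; field.
  rewrite h1 h2 !exprS /r; field.
  by apply/andP; split => //; apply/eqP; lra.
have [_ hN] := claim N.-1 (ltac:(lia)).
rewrite prednK in hN; last by lia.
rewrite LN in hN.
set z := c * (1 - r ^+ N) / (1 - r) in hN.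
have z1 : z = 1 by lra.
have hc : c = z * (1 - r) / (1 - r ^+ N).
  by rewrite /z; field; rewrite rN r1'.
have [_ h2] := claim 1%N (ltac:(lia)).
by rewrite h2 hc z1; field; rewrite rN r1'.
Qed.

Local Open Scope classical_set_scope.
Local Open Scope ring_scope.

Definition U (R : ringType) (a : R) N n j := \sum_(k < n) cw a N k j.

Lemma cw_ge0 (R : realFieldType) (a : R) N n j : 0 <= a -> a <= 1 -> 0 <= cw a N n j.
Proof.
move=> a0 a1; elim: n j => [|n IH] j /=; first by case: (j == 0%N).
case: (0 < j < N)%N => //; apply: addr_ge0; apply: mulr_ge0 => //.
by rewrite subr_ge0.
Qed.

Lemma U_rec (R : ringType) (a : R) N n j : (0 < j < N)%N ->
  U a N n.+1 j = a * U a N n j.-1 + (1 - a) * U a N n j.+1.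
Proof.
move=> hj; rewrite /U big_ord_recl /= !mulr_sumr -big_split /=.
have -> : (j == 0%N) = false by case: j hj.
rewrite add0r; by apply: eq_bigr => i _; rewrite hj add0n.
Qed.

Lemma U0 (R : ringType) (a : R) N n : U a N n.+1 0 = 1.
Proof.
by rewrite /U big_ord_recl /= big1 ?addr0.
Qed.

Lemma UN (R : ringType) (a : R) N n j : (0 < N)%N -> (N <= j)%N -> U a N n j = 0.
Proof.
move=> N0 hj; rewrite /U big1 // => -[[|k] hk] _ /=.
  by have -> : (j == 0%N) = false by lia.
by have -> : (0 < j < N)%N = false by lia.
Qed.

Lemma U_bound (R : realFieldType) (a : R) N n j : 0 <= a -> a <= 1 -> (0 < N)%N ->
  0 <= U a N n j <= 1.
Proof.
move=> a0 a1 N0; elim: n j => [|n IH] j; first by rewrite /U big_ord0 lexx ler01.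
case: j => [|j]; first by rewrite U0 ler01 lexx.
case: (ltnP j.+1 N) => hj; last by rewrite UN // lexx ler01.
rewrite U_rec //=; have /andP [h1 h2] := IH j; have /andP [h3 h4] := IH j.+2.
apply/andP; split; nra.
Qed.

Lemma U_mono (R : realFieldType) (a : R) N n j : 0 <= a -> a <= 1 ->
  U a N n j <= U a N n.+1 j.
Proof.
by move=> a0 a1; rewrite /U big_ord_recr /= lerDl cw_ge0.
Qed.

Lemma sub_cvg : (fun m => (2 * m).+1)%N @ \oo --> \oo.
Proof.
move=> P [n _ Pn]; exists n => // m /= hm; apply: Pn; rewrite /=; lia.
Qed.

Lemma U_cvg (R : realType) (a : R) N j : 0 <= a -> a <= 1 -> (0 < N)%N ->
  (fun n => U a N n j) @ \oo --> sup (range (fun n => U a N n j)).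
Proof.
move=> a0 a1 N0; apply: nondecreasing_cvgn.
  by apply/nondecreasing_seqP => n; exact: U_mono.
by exists 1 => _ [n _ <-]; case/andP: (U_bound n j a0 a1 N0).
Qed.

Unset Implicit Arguments.
Set Strict Implicit.
Theorem lemma4 (R : realType) (d : nat) (alpha : R) :
  (1 <= d)%N -> 0 < alpha -> alpha < 2^-1 ->
  (fun n : nat => \sum_(0 <= s < n) (F d s)%:R * (alpha * (1 - alpha)) ^+ s)
    @ \oo -->
  alpha ^- 2 *
    (1 - (1 - 2 * alpha) /
           ((1 - alpha) ^+ 2 * (1 - (alpha / (1 - alpha)) ^+ (d + 2)))).
Proof.
move=> d1 a0 a2.

have a0' : 0 <= alpha by lra.
have a1 : alpha <= 1 by lra.
set N := (d + 2)%N.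
have N0 : (0 < N)%N by rewrite /N addn2.
pose L j := sup (range (fun n => U alpha N n j)).
have HL j : (fun n => U alpha N n j) @ \oo --> L j by exact: U_cvg.
have L0 : L 0%N = 1.
  have h := HL 0%N; rewrite -cvg_shiftS in h.
  have E : (fun n => U alpha N n.+1 0) = (fun _ => 1) by apply: funext => n; rewrite U0.
  rewrite E in h; exact: (cvg_unique (@Rhausdorff R) h (cvg_cst (1 : R))).
have LN : L N = 0.
  have h := HL N.
  have E : (fun n => U alpha N n N) = (fun _ => 0) by apply: funext => n; rewrite UN.
  rewrite E in h; exact: (cvg_unique (@Rhausdorff R) h (cvg_cst (0 : R))).
have Lrec j : (0 < j < N)%N -> L j = alpha * L j.-1 + (1 - alpha) * L j.+1.
  move=> hj; have h := HL j; rewrite -cvg_shiftS in h.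
  have E : (fun n => U alpha N n.+1 j) = (fun n => alpha * U alpha N n j.-1 + (1 - alpha) * U alpha N n j.+1).
    by apply: funext => n; rewrite U_rec.
  rewrite E in h; apply: (cvg_unique (@Rhausdorff R) h).
  by apply: cvgD; apply: cvgMr.
have N2 : (2 < N)%N by rewrite /N addn2 ltnS ltnS.
have L2 := solve_rec a0 a2 N2 L0 LN Lrec.
have an0 : alpha != 0 by apply/eqP; lra.
have a1' : 1 - alpha != 0 by apply/eqP; lra.
have key m : \sum_(0 <= s < m) (F d s)%:R * (alpha * (1 - alpha)) ^+ s
    = alpha ^- 2 * U alpha N (2 * m).+1 2.
  elim: m => [|m IH].
    by rewrite big_geq // /U big_ord_recl big_ord0 /= mulr0n addr0 mulr0.
  rewrite big_nat_recr //= IH.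
  have -> : (2 * m.+1).+1 = ((2 * m).+1).+2 by lia.
  have eU : U alpha N ((2 * m).+1).+2 2 =
      U alpha N (2 * m).+1 2 + cw alpha N (2 * m).+1 2 + cw alpha N (2 * m).+2 2.
    by rewrite /U !big_ord_recr.
  rewrite eU cw_odd.
  have -> : ((2 * m).+2 = (m + 2) + m)%N by lia.
  by rewrite /N cw_F exprMn exprD; field; rewrite ?an0 ?a1'.
have E : (fun n => \sum_(0 <= s < n) (F d s)%:R * (alpha * (1 - alpha)) ^+ s)
    = (fun n => alpha ^- 2 * U alpha N (2 * n).+1 2).
  by apply: funext => n; exact: key.
rewrite E.
set y := (alpha / (1 - alpha)) ^+ N.
have y1 : 1 - y != 0.
  have r0 : 0 <= alpha / (1 - alpha) by rewrite divr_ge0 //; lra.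
  have r1 : alpha / (1 - alpha) < 1 by rewrite ltr_pdivrMr ?mul1r; lra.
  have : y < 1 by rewrite /y exprn_ilt1 // -lt0n.
  by move=> ?; apply/eqP; lra.
have -> : alpha ^- 2 * (1 - (1 - 2 * alpha) / ((1 - alpha) ^+ 2 * (1 - y)))
    = alpha ^- 2 * L 2%N.
  by rewrite L2 -/y; congr (_ * _); field; rewrite ?an0 ?a1' ?y1.
apply: cvgMr.
exact: (cvg_comp _ _ sub_cvg (HL 2%N)).
Qed.
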